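(* Consider FedProx, as described in the context, and a round $t$ whose step size satisfies $\gamma_t\le1/\alpha$. Assume that the bounded variance, bounded stochastic gradient norm and $L$-smoothness assumptions hold. Then for every client $i$ and every $k\in\{0,\dots,E\}$, $$\mathbb{E}\|\overline{\mathbf{w}}_{t,k}-\mathbf{w}^i_{t,k}\|^2\le4\gamma_t^2E^2G^2.$$
   Context: Setting: there are $C$ clients with weights $p_i\ge0$ satisfying $\sum_ip_i=1$, local objectives $F_i:\mathbb{R}^D\to\mathbb{R}$, and global objective $F=\sum_ip_iF_i$. FedProx with $\alpha>0$, $E\ge1$ local steps and step sizes $\gamma_t$, with all clients participating: in round $t$, $\mathbf{w}^i_{t,0}=\overline{\mathbf{w}}_{t,0}$ and, for $k=0,\dots,E-1$, $$\mathbf{w}^i_{t,k+1}=(1-\alpha\gamma_t)\mathbf{w}^i_{t,k}+\alpha\gamma_t\overline{\mathbf{w}}_{t,0}-\gamma_tg_i(\mathbf{w}^i_{t,k}),$$ with stochastic gradients $g_i$ of $F_i$ sampled independently given the past. Also $\overline{\mathbf{w}}_{t,k}=\sum_ip_i\mathbf{w}^i_{t,k}$ and $\overline{\mathbf{w}}_{t+1,0}=\overline{\mathbf{w}}_{t,E}$. Assumptions: - Unbiasedness: $\mathbb{E}\,g_i(\mathbf{w}^i_{t,k})=\nabla F_i(\mathbf{w}^i_{t,k})$. - Variance: $\mathbb{E}\|g_i(\mathbf{w}^i_{t,k})-\nabla F_i(\mathbf{w}^i_{t,k})\|^2\le\sigma^2$. - Bounded second moment: $\mathbb{E}\|g_i(\mathbf{w}^i_{t,k})\|^2\le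 G^2$ for all $i,t,k$. - Smoothness: each $\nabla F_i$ is $L$-Lipschitz. $\mathbb{E}$ is total expectation. *)

(* Defs.v *)
From HB Require Import structures.
From mathcomp Require Import all_boot all_order all_algebra.
From mathcomp Require Import all_classical all_reals all_analysis.
Set Implicit Arguments. Unset Strict Implicit. Unset Printing Implicit Defensive.
Import Order.TTheory GRing.Theory Num.Theory.
Import numFieldNormedType.Exports.
Local Open Scope ring_scope.

Definition sqnorm (R : realType) (D : nat) (v : 'rV[R]_D) : R :=
  \sum_(j < D) (v ord0 j) ^+ 2.

Definition dotp (R : realType) (D : nat) (u v : 'rV[R]_D) : R :=
  \sum_(j < D) u ord0 j * v ord0 j.

Definition enorm (R : realType) (D : nat) (v : 'rV[R]_D) : R :=
  Num.sqrt (sqnorm v).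

Definition wavg (R : realType) (D C : nat) (p : 'I_C -> R)
  (w : 'I_C -> 'rV[R]_D) : 'rV[R]_D := \sum_(i < C) p i *: w i.

(* Main.v *)
Require Import Defs.
From HB Require Import structures.
From mathcomp Require Import all_boot all_order all_algebra.
From mathcomp Require Import all_classical all_reals all_analysis.
From mathcomp Require Import ring lra zify measurable_realfun.
Import Order.TTheory GRing.Theory Num.Theory.
Import numFieldNormedType.Exports.
Local Open Scope ring_scope.


Lemma sq_wsum (R : realFieldType) (I : finType) (c x : I -> R) :
  (forall q, 0 <= c q) ->
  (\sum_q c q * x q) ^+ 2 <= (\sum_q c q) * \sum_q c q * x q ^+ 2.
Proof.
move=> c0.
set S := \sum_q c q; set Q := \sum_q c q * x q ^+ 2; set M := \sum_q c q * x q.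
have A0 : 0 <= \sum_q \sum_r c q * c r * (x q - x r) ^+ 2.
  by apply: sumr_ge0 => q _; apply: sumr_ge0 => r _; apply: mulr_ge0; [exact: mulr_ge0|exact: sqr_ge0].
have E : \sum_q \sum_r c q * c r * (x q - x r) ^+ 2 = 2 * (S * Q - M ^+ 2).
  have e1 : S * Q = \sum_q \sum_r c q * (c r * x r ^+ 2).
    by rewrite /S /Q mulr_suml; apply: eq_bigr => q _; rewrite mulr_sumr.
  have e2 : S * Q = \sum_q \sum_r (c q * x q ^+ 2) * c r.
    by rewrite mulrC /S /Q mulr_suml; apply: eq_bigr => q _; rewrite mulr_sumr.
  have e3 : M ^+ 2 = \sum_q \sum_r (c q * x q) * (c r * x r).
    by rewrite expr2 /M mulr_suml; apply: eq_bigr => q _; rewrite mulr_sumr.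
  have -> : 2 * (S * Q - M ^+ 2) = S * Q + S * Q - 2 * M ^+ 2 by ring.
  rewrite {1}e1 e2 e3 -big_split mulr_sumr -sumrB /=.
  apply: eq_bigr => q _; rewrite -big_split mulr_sumr -sumrB /=.
  apply: eq_bigr => r _; ring.
have : 0 <= S * Q - M ^+ 2.
  by have := A0; rewrite E pmulr_rge0 //.
by rewrite subr_ge0.
Qed.

Section M.

Context (R : realType) (d : measure_display) (T : measurableType d) (D : nat).

Definition mrv (v : T -> 'rV[R]_D) := forall c, measurable_fun setT (fun x => v x ord0 c).

Lemma mrv_sum (I : finType) (v : I -> T -> 'rV[R]_D) :
  (forall q, mrv (v q)) -> mrv (fun x => \sum_q v q x).
Proof.
move=> h c; under eq_fun do rewrite summxE.
by apply: measurable_sum => q; exact: h.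
Qed.

Lemma mrv_scale (a : R) (v : T -> 'rV[R]_D) : mrv v -> mrv (fun x => a *: v x).
Proof.
move=> h c; under eq_fun do rewrite mxE.
exact: measurable_funM.
Qed.

Lemma mrv_sub (u v : T -> 'rV[R]_D) : mrv u -> mrv v -> mrv (fun x => u x - v x).
Proof.
move=> hu hv c; under eq_fun do rewrite !mxE.
exact: measurable_funB.
Qed.

Lemma mrv_sqnorm (v : T -> 'rV[R]_D) : mrv v -> measurable_fun setT (fun x => sqnorm (v x)).
Proof.
move=> h; rewrite /sqnorm; apply: measurable_sum => c.
exact: measurable_funX.
Qed.

Lemma int_bound (mu : {measure set T -> \bar R}) (I : finType) (c : I -> R)
  (f : I -> T -> R) (b : I -> R) :
  (forall q, 0 <= c q) -> (forall q x, 0 <= f q x) ->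
  (forall q, measurable_fun setT (f q)) ->
  (forall q, (\int[mu]_x (f q x)%:E <= (b q)%:E)%E) ->
  (\int[mu]_x (\sum_q c q * f q x)%:E <= (\sum_q c q * b q)%:E)%E.
Proof.
move=> c0 f0 mf hb.
under eq_integral do rewrite -sumEFin.
rewrite ge0_integral_sum //; last first.
- by move=> q x _; rewrite lee_fin mulr_ge0.
- by move=> q; apply/measurable_EFinP; exact: measurable_funM.
rewrite -sumEFin; apply: lee_sum => q _.
under eq_integral do rewrite EFinM.
rewrite ge0_integralZl_EFin //.
- by rewrite EFinM; apply: lee_wpmul2l; [rewrite lee_fin|exact: hb].
- by move=> x _; rewrite lee_fin.
- by apply/measurable_EFinP; exact: mf.
Qed.


Lemma sqnorm_ge0 (v : 'rV[R]_D) : 0 <= sqnorm v.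
Proof. by apply: sumr_ge0 => j _; exact: sqr_ge0. Qed.

Lemma sqnorm_scale (a : R) (v : 'rV[R]_D) : sqnorm (a *: v) = a ^+ 2 * sqnorm v.
Proof. by rewrite /sqnorm mulr_sumr; apply: eq_bigr => j _; rewrite mxE exprMn. Qed.

Lemma sqnorm_sub2 (u v : 'rV[R]_D) : sqnorm (u - v) <= 2 * sqnorm u + 2 * sqnorm v.
Proof.
rewrite /sqnorm !mulr_sumr -big_split /=; apply: ler_sum => j _; rewrite !mxE.
have := sqr_ge0 (u ord0 j + v ord0 j); nra.
Qed.

Lemma sqnorm_wsum (I : finType) (c : I -> R) (v : I -> 'rV[R]_D) :
  (forall q, 0 <= c q) ->
  sqnorm (\sum_q c q *: v q) <= (\sum_q c q) * \sum_q c q * sqnorm (v q).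
Proof.
move=> c0; rewrite /sqnorm.
under eq_bigr do rewrite summxE.
under eq_bigr do under eq_bigr do rewrite mxE.
under [X in _ * X]eq_bigr do rewrite mulr_sumr.
rewrite exchange_big /= mulr_sumr; apply: ler_sum => j _.
exact: sq_wsum.
Qed.

Definition Ufun (b : R) (G : nat -> T -> 'rV[R]_D) (m : nat) (x : T) :=
  \sum_(q < m) b ^+ (m.-1 - q) *: G q x.

Lemma mrv_U b G m : (forall q, mrv (G q)) -> mrv (Ufun b G m).
Proof.
move=> h; rewrite /Ufun; apply: mrv_sum => q; apply: mrv_scale; exact: h.
Qed.

Lemma U_bound b G m x : 0 <= b -> b <= 1 ->
  sqnorm (Ufun b G m x) <= m%:R * \sum_(q < m) 1 * sqnorm (G q x).
Proof.
move=> b0 b1; rewrite /Ufun.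
have H := @sqnorm_wsum _ (fun q : 'I_m => b ^+ (m.-1 - q)) (fun q : 'I_m => G q x)
  (fun q => exprn_ge0 _ b0).
apply: le_trans H _; apply: ler_pM.
- by apply: sumr_ge0 => q _; exact: exprn_ge0.
- by apply: sumr_ge0 => q _; apply: mulr_ge0; [exact: exprn_ge0|exact: sqnorm_ge0].
- have -> : m%:R = \sum_(q < m) (1 : R) by rewrite sumr_const card_ord.
  by apply: ler_sum => q _; exact: exprn_ile1.
- apply: ler_sum => q _; apply: ler_wpM2r; first exact: sqnorm_ge0.
  exact: exprn_ile1.
Qed.

End M.
Arguments Ufun {R d T D}.
Arguments mrv {R d T D}.

Theorem lemma3
  (R : realType) (d : measure_display) (T : measurableType d)
  (P : probability T R)
  (C D nE : nat) (p : 'I_C -> R)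
  (F : 'I_C -> 'rV[R]_D -> R) (gradF : 'I_C -> 'rV[R]_D -> 'rV[R]_D)
  (alpha L sigma G : R) (gamma : nat -> R)
  (w : 'I_C -> nat -> nat -> T -> 'rV[R]_D)
  (g : 'I_C -> nat -> nat -> T -> 'rV[R]_D)
  (t : nat) (i : 'I_C) (k : nat) :
  (forall j, 0 <= p j) -> \sum_(j < C) p j = 1 ->
  0 < alpha -> (1 <= nE)%N -> (forall s, 0 < gamma s) ->
  (* gradF j is the gradient of F j *)
  (forall j x, differentiable (F j) x /\
     forall v, 'd (F j) x v = dotp (gradF j x) v) ->
  (* FedProx local iterations, all clients participating *)
  (forall j s x, w j s 0%N x = wavg p (fun l => w l s 0%N x)) ->
  (forall j s m x, (m < nE)%N ->
     w j s m.+1 x = (1 - alpha * gamma s) *: w j s m x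
                    + (alpha * gamma s) *: wavg p (fun l => w l s 0%N x)
                    - gamma s *: g j s m x) ->
  (forall s x, wavg p (fun l => w l s.+1 0%N x) = wavg p (fun l => w l s nE x)) ->
  (* stochastic gradients are random vectors *)
  (forall j s m c, measurable_fun setT (fun x => g j s m x ord0 c)) ->
  (* bounded variance *)
  (forall j s m, (m < nE)%N ->
     (\int[P]_x (sqnorm (g j s m x - gradF j (w j s m x)))%:E <= (sigma ^+ 2)%:E)%E) ->
  (* bounded second moment *)
  (forall j s m, (m < nE)%N ->
     (\int[P]_x (sqnorm (g j s m x))%:E <= (G ^+ 2)%:E)%E) ->
  (* L-smoothness *)
  (forall j x y, enorm (gradF j x - gradF j y) <= L * enorm (x - y)) ->
  gamma t <= 1 / alpha -> (k <= nE)%N ->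
  (\int[P]_x (sqnorm (wavg p (fun l => w l t k x) - w i t k x))%:E
     <= (4 * gamma t ^+ 2 * (nE%:R) ^+ 2 * G ^+ 2)%:E)%E.
Proof.
move=> p0 psum a0 nE1 gam0 _ H0 Hrec _ mg _ HG _ gle kle.
set ga := gamma t.
have ga0 : 0 < ga by exact: gam0.
have a1 : alpha * ga <= 1.
  have := ler_wpM2l (ltW a0) gle.
  by rewrite mulrA mulr1 divff ?gt_eqF // mul1r.
pose b := 1 - alpha * ga.
have b0 : 0 <= b by rewrite /b subr_ge0.
have b1 : b <= 1 by rewrite /b lerBlDr lerDl mulr_ge0 // ltW.
pose U j m x := Ufun b (g j t) m x.
have Uw : forall m, (m <= nE)%N -> forall j x, w j t m x = w j t 0 x - ga *: U j m x.
  elim => [|m IH] hm j x; first by rewrite /U /Ufun big_ord0 scaler0 subr0.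
  have hm' : (m < nE)%N := hm.
  rewrite (Hrec j t m x hm').
  rewrite (IH (ltnW hm') j x).
  rewrite -(H0 j t x) /U /Ufun big_ord_recr /= subnn expr0 scale1r.
  have -> : \sum_(q < m) b ^+ (m - q) *: g j t q x
            = b *: \sum_(q < m) b ^+ (m.-1 - q) *: g j t q x.
    rewrite scaler_sumr; apply: eq_bigr => q _; rewrite scalerA -exprS.
    by congr (_ ^+ _ *: _); have := ltn_ord q; lia.
  move: (\sum_(q < m) _) => S.
  apply/rowP => c; rewrite !mxE /b /ga.
  set W1 := w j t 0 x 0 c.
  ring.
have W : forall l x, w l t 0 x = w i t 0 x.
  by move=> l x; rewrite (H0 l t x) (H0 i t x).
have Dg : forall (V : 'I_C -> 'rV[R]_D) (W0 : 'rV[R]_D),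
    wavg p (fun l => W0 - ga *: V l) - (W0 - ga *: V i)
    = \sum_l p l *: (ga *: (V i - V l)).
  move=> V W0; rewrite /wavg.
  apply/rowP => c; rewrite !mxE !summxE.
  under eq_bigr do rewrite !mxE.
  under [in RHS]eq_bigr do rewrite !mxE.
  rewrite [X in _ - X = _](_ : _ = \sum_l p l * (W0 0 c - ga * V i 0 c)); last first.
    by rewrite -mulr_suml psum mul1r.
  rewrite -sumrB; apply: eq_bigr => l _; rewrite /ga; ring.
have Dx : forall x, wavg p (fun l => w l t k x) - w i t k x
    = \sum_l p l *: (ga *: (U i k x - U l k x)).
  move=> x; rewrite -(Dg (fun l => U l k x) (w i t 0 x)) (Uw k kle i x); congr (_ - _).
  rewrite /wavg; apply: eq_bigr => l _; by rewrite (Uw k kle l x) (W l x).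
pose Sg l x := \sum_(q < k) 1 * sqnorm (g l t q x).
pose coef (l : 'I_C) := 2 * ga ^+ 2 * k%:R * (p l + (l == i)%:R).
pose B x := \sum_l coef l * Sg l x.
have Sg0 : forall l x, 0 <= Sg l x.
  by move=> l x; apply: sumr_ge0 => q _; rewrite mul1r; exact: sqnorm_ge0.
have coef0 : forall l, 0 <= coef l.
  move=> l; apply: mulr_ge0; last by apply: addr_ge0; [exact: p0|exact: ler0n].
  by apply: mulr_ge0; [apply: mulr_ge0; [by []|exact: sqr_ge0]|exact: ler0n].
have PB : forall x, sqnorm (\sum_l p l *: (ga *: (U i k x - U l k x))) <= B x.
  move=> x.
  have H1 := @sqnorm_wsum _ _ _ p (fun l => ga *: (U i k x - U l k x)) p0.
  apply: le_trans H1 _; rewrite psum mul1r.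
  have HU : forall j, sqnorm (U j k x) <= k%:R * Sg j x.
    by move=> j; exact: U_bound.
  apply: (@le_trans _ _ (\sum_l p l * (ga ^+ 2 * (2 * (k%:R * Sg i x) + 2 * (k%:R * Sg l x))))).
    apply: ler_sum => l _; apply: ler_wpM2l; first exact: p0.
    rewrite sqnorm_scale; apply: ler_wpM2l; first exact: sqr_ge0.
    apply: le_trans (@sqnorm_sub2 _ _ (U i k x) (U l k x)) _.
    by apply: lerD; apply: ler_wpM2l => //; exact: HU.
  rewrite le_eqVlt; apply/orP; left; apply/eqP.
  rewrite [LHS](_ : _ = \sum_l (p l * (2 * ga ^+ 2 * k%:R * Sg i x)
                      + 2 * ga ^+ 2 * k%:R * p l * Sg l x)); last first.
    by apply: eq_bigr => l _; ring.
  rewrite big_split /= -mulr_suml psum mul1r addrC.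
  rewrite /B [RHS](_ : _ = \sum_l (2 * ga ^+ 2 * k%:R * p l * Sg l x
                      + 2 * ga ^+ 2 * k%:R * (l == i)%:R * Sg l x)); last first.
    by apply: eq_bigr => l _; rewrite /coef; ring.
  rewrite big_split /=; congr (_ + _).
  rewrite (bigD1 i) //= eqxx mulr1 big1 ?addr0 // => l /negbTE ->.
  by rewrite mulr0 mul0r.
under eq_integral => x _ do rewrite Dx.
have mU : forall j, mrv (U j k).
  by move=> j; apply: mrv_U => q; exact: mg.
have mSg : forall l, measurable_fun setT (Sg l).
  move=> l; apply: measurable_sum => q; apply: measurable_funM => //.
  by apply: mrv_sqnorm => c; exact: mg.
apply: (@le_trans _ _ (\int[P]_x (B x)%:E)%E).
  apply: ge0_le_integral => //.
  - by move=> x _; rewrite lee_fin; exact: sqnorm_ge0.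
  - apply/measurable_EFinP; apply: mrv_sqnorm; apply: mrv_sum => l.
    by apply: mrv_scale; apply: mrv_scale; apply: mrv_sub; exact: mU.
  - apply/measurable_EFinP; apply: measurable_sum => l.
    by apply: measurable_funM => //; exact: mSg.
  - by move=> x _; rewrite lee_fin; exact: PB.
apply: le_trans (@int_bound _ _ _ P _ coef (fun l x => Sg l x)
   (fun _ => \sum_(q < k) 1 * G ^+ 2) coef0 Sg0 mSg _) _.
  move=> l /=; rewrite /Sg.
  apply: (@int_bound _ _ _ P 'I_k (fun _ => 1) (fun q x => sqnorm (g l t q x))
          (fun _ => G ^+ 2)).
  - by move=> q.
  - by move=> q x; exact: sqnorm_ge0.
  - by move=> q; apply: mrv_sqnorm => c; exact: mg.
  - by move=> q; apply: HG; exact: leq_trans (ltn_ord q) kle.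
rewrite lee_fin.
have -> : \sum_(q < k) 1 * G ^+ 2 = k%:R * G ^+ 2.
  rewrite (eq_bigr (fun _ => G ^+ 2)); last by move=> q _; rewrite mul1r.
  by rewrite sumr_const card_ord mulr_natl.
rewrite -mulr_suml /coef -mulr_sumr big_split /= psum.
rewrite (bigD1 i) //= eqxx big1 ?addr0; last by move=> l /negbTE ->.
have hk : k%:R <= nE%:R :> R by rewrite ler_nat.
have hk0 : 0 <= k%:R :> R by exact: ler0n.
have hk2 : k%:R ^+ 2 <= nE%:R ^+ 2 :> R.
  by rewrite !expr2; apply: ler_pM.
have -> : (true%:R : R) = 1 by [].
rewrite [X in X <= _](_ : _ = 4 * ga ^+ 2 * G ^+ 2 * k%:R ^+ 2); last by ring.
rewrite [X in _ <= X](_ : _ = 4 * ga ^+ 2 * G ^+ 2 * nE%:R ^+ 2); last by ring.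
apply: ler_wpM2l => //.
by apply: mulr_ge0; [apply: mulr_ge0; [by []|exact: sqr_ge0]|exact: sqr_ge0].
Qed.
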